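(* Let $H$ be a fractionally $k$-colored digraph on $n$ nodes, and let $\mathbb{L}(H)$ be the random $k$-colored digraph obtained from it. Then $d_\square(H,\mathbb{L}(H))\le \frac{10k}{\sqrt n}$ with probability at least $1-ke^{-n}$.
   Context: A fractionally $k$-colored digraph $H$ on node set $V$ assigns to every ordered pair $(i,j)$ of distinct nodes nonnegative weights $\beta^1_H(i,j),\dots,\beta^k_H(i,j)$ with $\sum_h\beta^h_H(i,j)=1$; a $k$-colored digraph (complete digraph with each ordered pair of distinct nodes colored by one of $1,\dots,k$) is the special case where $\beta^h$ is the indicator of color $h$. The random $k$-colored digraph $\mathbb{L}(H)$ on $V$ colors each pair with color $h$ with probability $\beta^h_H(i,j)$, independently for different pairs. For two fractionally $k$-colored digraphs $H,H'$ on the same node set $V$, $d_\square(H,H')=\frac{1}{|V|^2}\sum_{h=1}^k\max_{S,T\subseteq V}\Bigl|\sum_{i\in S, j\in T}(\beta^h_H(i,j)-\beta^h_{H'}(i,j))\Bigr|$. *)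

(* Defs.v *)
From HB Require Import structures.
From mathcomp Require Import all_boot all_order all_algebra.
From mathcomp Require Import all_classical all_reals.
From mathcomp.analysis Require Import sequences exp.

Set Implicit Arguments.
Unset Strict Implicit.
Unset Printing Implicit Defensive.

Import Order.TTheory GRing.Theory Num.Theory.
Local Open Scope ring_scope.

Definition offdiag (n : nat) := {p : 'I_n * 'I_n | p.1 != p.2}.

(* A weight assignment: beta i j h is beta^h(i,j) (node set 'I_n, colors 'I_k).
   Values on the diagonal i = j are irrelevant and never used. *)
Definition weights (R : realType) (n k : nat) := 'I_n -> 'I_n -> 'I_k -> R.

Definition frac_colored (R : realType) (n k : nat) (H : weights R n k) : Prop :=
  forall i j : 'I_n, i != j ->
    (forall h, 0 <= H i j h) /\ \sum_(h < k) H i j h = 1.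

(* A k-colored digraph (coloring of the ordered pairs of distinct nodes)
   seen as a fractionally k-colored digraph (indicator weights). *)
Definition colored_weights (R : realType) (n k : nat)
    (c : {ffun offdiag n -> 'I_k}) : weights R n k :=
  fun i j h =>
    match @insub _ (fun p : 'I_n * 'I_n => p.1 != p.2) (offdiag n) (i, j) with
    | Some p => ((c p == h)%:R : R)
    | None => 0
    end.

(* The cut distance d_square(H,H'). Sums over S x T range over pairs of
   distinct nodes (weights are only defined there). *)
Definition dcut (R : realType) (n k : nat) (H H' : weights R n k) : R :=
  (n%:R ^+ 2)^-1 *
  \sum_(h < k)
    \big[Num.max/0]_(S : {set 'I_n})
      \big[Num.max/0]_(T : {set 'I_n})
        `| \sum_(i in S) \sum_(j in T | i != j) (H i j h - H' i j h) |.

(* Distribution of the random k-colored digraph L(H): each pair (i,j) gets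
   color h with probability H i j h, independently. Probability of an event. *)
Definition probL (R : realType) (n k : nat) (H : weights R n k)
    (E : pred {ffun offdiag n -> 'I_k}) : R :=
  \sum_(c | E c) \prod_(p : offdiag n) H (val p).1 (val p).2 (c p).

(* Main.v *)
Require Import Defs.
From HB Require Import structures.
From mathcomp Require Import all_boot all_order all_algebra.
From mathcomp Require Import all_classical all_reals.
From mathcomp.analysis Require Import sequences exp.
From mathcomp Require Import ring lra.
Import Order.TTheory GRing.Theory Num.Theory.
Local Open Scope ring_scope.
Set Implicit Arguments. Unset Strict Implicit.

Lemma exp_quad (R : realType) (x : R) : x <= 1/2 -> expR x <= 1 + x + 2 * x ^+ 2.
Proof.
move=> hx.
have h1 := expR_ge1Dx (- x).
rewrite expRN in h1.
have e0 := expR_gt0 x.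
have h2 : expR x * (1 - x) <= 1.
  have : (1 - x) * expR x <= (expR x)^-1 * expR x.
    by rewrite ler_pM2r // -[_ - x]/(1 + - x).
  by rewrite mulVf ?gt_eqF // mulrC.
nra.
Qed.

Lemma ge0_le_sum (R : realType) (I : finType) (F : I -> R) i :
  (forall j, 0 <= F j) -> F i <= \sum_j F j.
Proof.
move=> h; rewrite (bigD1 i) //= lerDl; exact: sumr_ge0.
Qed.

Lemma factor_bound (R : realType) k (w : 'I_k -> R) (h : 'I_k) (l : R) :
  (forall x, 0 <= w x) -> \sum_x w x = 1 -> -(1/2) <= l <= 1/2 ->
  \sum_x w x * expR (l * (w h - (x == h)%:R)) <= expR (2 * l ^+ 2).
Proof.
move=> w0 w1 /andP[l1 l2].
have wh1 : w h <= 1 by rewrite -w1; apply: ge0_le_sum.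
have wh0 := w0 h.
apply: (le_trans (y := \sum_x w x * (1 + 2 * l ^+ 2 + l * (w h - (x == h)%:R)))).
  apply: ler_sum => x _; apply: ler_wpM2l => //.
  set b : R := (x == h)%:R.
  have b01 : 0 <= b <= 1 by rewrite /b; case: (x == h) => /=; lra.
  case/andP: b01 => b0 b1.
  have hy : l * (w h - b) <= 1/2 by nra.
  have := exp_quad hy; have : (w h - b)^+2 <= 1 by nra.
  move=> hb he; apply: (le_trans he); nra.
rewrite (eq_bigr (fun x => (1 + 2 * l ^+ 2) * w x + l * w h * w x - l * (w x * (x == h)%:R))); last first.
  by move=> x _; ring.
rewrite big_split /= big_split /= -!mulr_sumr w1.

rewrite sumrN -mulr_sumr.
rewrite (bigD1 h) //= eqxx mulr1 big1 ?addr0; last first.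
  by move=> x /negbTE ->; rewrite mulr0.
rewrite !mulr1 addrK; exact: expR_ge1Dx.
Qed.

Lemma mass (R : realType) (D : finType) k (w : D -> 'I_k -> R) (g : D -> 'I_k -> R) :
  \sum_(c : {ffun D -> 'I_k}) (\prod_p w p (c p)) * \prod_p g p (c p) =
  \prod_p \sum_x w p x * g p x.
Proof.
rewrite bigA_distr_bigA /=; apply: eq_bigr => c _; by rewrite -big_split.
Qed.

Lemma sum_offdiag (R : realType) n (G : 'I_n * 'I_n -> R) :
  \sum_(p : offdiag n) G (val p) = \sum_(x | x.1 != x.2) G x.
Proof.
symmetry.
rewrite (reindex_omap (val : offdiag n -> _) insub); last first.
  by move=> x hx; rewrite insubT.
apply: eq_bigl => p; rewrite valK eqxx andbT.
by case: p.
Qed.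

Lemma reindexD (R : realType) n k (H : weights R n k) (c : {ffun offdiag n -> 'I_k})
   (h : 'I_k) (S T : {set 'I_n}) :
  \sum_(i in S) \sum_(j in T | i != j) (H i j h - colored_weights R c i j h) =
  \sum_(p : offdiag n) (if ((val p).1 \in S) && ((val p).2 \in T)
       then H (val p).1 (val p).2 h - (c p == h)%:R else 0).
Proof.
pose G := fun x : 'I_n * 'I_n => if (x.1 \in S) && (x.2 \in T)
       then H x.1 x.2 h - colored_weights R c x.1 x.2 h else 0.
transitivity (\sum_(p : offdiag n) G (val p)); last first.
  apply: eq_bigr => p _ /=; rewrite /G; case: ifP => // _.
  by rewrite /colored_weights -surjective_pairing valK.
rewrite sum_offdiag pair_big_dep /= [RHS]big_mkcond [LHS]big_mkcond /=.
apply: eq_bigr => -[i j] _ /=; rewrite /G /=.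
by case: (i \in S); case: (j \in T); case: (i != j).
Qed.

Lemma tail (R : realType) n k (H : weights R n k) (HF : frac_colored H)
   (h : 'I_k) (S T : {set 'I_n}) (l : R) :
  -(1/2) <= l <= 1/2 ->
  \sum_(c : {ffun offdiag n -> 'I_k})
     (\prod_(p : offdiag n) H (val p).1 (val p).2 (c p)) *
     expR (l * \sum_(i in S) \sum_(j in T | i != j) (H i j h - colored_weights R c i j h))
  <= expR ((n * n)%:R * (2 * l ^+ 2)).
Proof.
move=> hl.
pose g := fun (p : offdiag n) (x : 'I_k) => if ((val p).1 \in S) && ((val p).2 \in T)
   then expR (l * (H (val p).1 (val p).2 h - (x == h)%:R)) else 1.
have w0 : forall (p : offdiag n) x, 0 <= H (val p).1 (val p).2 x.
  by move=> [[i j] /= hij] x; case: (HF i j hij).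
have w1 : forall (p : offdiag n), \sum_x H (val p).1 (val p).2 x = 1.
  by move=> [[i j] /= hij]; case: (HF i j hij).
have e1 : 1 <= expR (2 * l ^+ 2).
  apply: le_trans (expR_ge1Dx _); rewrite lerDl; apply: mulr_ge0 => //; exact: sqr_ge0.
set LHS := (X in X <= _).
have -> : LHS = (\sum_(c : {ffun offdiag n -> 'I_k})
     (\prod_(p : offdiag n) H (val p).1 (val p).2 (c p)) * \prod_p g p (c p)).
  apply: eq_bigr => c _; congr (_ * _).
  rewrite reindexD mulr_sumr expR_sum; apply: eq_bigr => p _.
  by rewrite /g; case: ifP => _ //; rewrite mulr0 expR0.
rewrite (mass (fun p x => H (val p).1 (val p).2 x) g).
apply: (le_trans (y := \prod_(p : offdiag n) expR (2 * l ^+ 2))).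
  apply: ler_prod => p _; apply/andP; split.
    apply: sumr_ge0 => x _; apply: mulr_ge0 => //; rewrite /g; case: ifP => _ //.
    exact: ltW (expR_gt0 _).
  rewrite /g; case: (_ && _).
    exact: factor_bound.
  by under eq_bigr do rewrite mulr1; rewrite w1.
rewrite prodr_const -expRM_natl ler_expR ler_wpM2r //.
  by apply: mulr_ge0 => //; exact: sqr_ge0.
rewrite ler_nat card_sig; apply: leq_trans (max_card _) _.
by rewrite card_prod card_ord.
Qed.

Lemma numfin (R : realType) n : (0 < n)%N ->
  2 * expR (- (9/2 * n%:R)) * (2 ^ n * 2 ^ n)%:R <= expR (- n%:R : R).
Proof.
move=> n0.
have e72 : 8 <= expR (7/2 : R).
  have := @expR_ge1Dxn R (7/2) 2 ltac:(lra).
  rewrite (_ : (2.+1)`! = 6)%N // !exprS expr0; lra.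
have -> : expR (- n%:R : R) = expR (- (9/2 * n%:R)) * expR (7/2 * n%:R).
  by rewrite -expRD; congr expR; field.
rewrite [2 * _]mulrC -[_ * 2 * _]mulrA ler_wpM2l ?(ltW (expR_gt0 _)) // mulrC expRM_natr.
apply: (le_trans (y := 8 ^+ n)); last first.
  apply: lerXn2r => //; rewrite ?nnegrE //; try lra.
rewrite (_ : (8 : R) = (8%N)%:R) // -natrX -natrM ler_nat.
have -> : (8 ^ n = 2 ^ n * (2 * 2) ^ n)%N by rewrite -expnMn.
rewrite -expnMn mulnC leq_mul2r; apply/orP; right.
case: n n0 => // n _.
by rewrite expnS leq_pmulr // expn_gt0.
Qed.

Theorem lemma1 (R : realType) (n k : nat) (H : weights R n k) :
  frac_colored H ->
  1 - k%:R * expR (- n%:R) <=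
  probL H (fun c => dcut H (colored_weights R c) <= 10 * k%:R / Num.sqrt n%:R).
Proof.
move=> HF.
set E := (fun c => _).
rewrite /probL.
have w0 : forall (p : offdiag n) x, 0 <= H (val p).1 (val p).2 x.
  by move=> [[i j] /= hij] x; case: (HF i j hij).
have w1 : forall (p : offdiag n), \sum_x H (val p).1 (val p).2 x = 1.
  by move=> [[i j] /= hij]; case: (HF i j hij).
have mu0 : forall c : {ffun offdiag n -> 'I_k},
    0 <= \prod_(p : offdiag n) H (val p).1 (val p).2 (c p).
  by move=> c; apply: prodr_ge0 => p _.
have tot : \sum_(c : {ffun offdiag n -> 'I_k})
    \prod_(p : offdiag n) H (val p).1 (val p).2 (c p) = 1.
  have /= := @mass R (offdiag n) k (fun p x => H (val p).1 (val p).2 x) (fun _ _ => 1).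
  under eq_bigr do rewrite prodr_const expr1n mulr1.
  move=> ->; apply: big1 => p _.
  under eq_bigr do rewrite mulr1.
  exact: w1.
have [n0|npos] := posnP n.
  rewrite (eq_bigl predT); last first.
    move=> c; rewrite /E /dcut; have -> : (n%:R : R) = 0 by rewrite n0.
    rewrite expr0n /= invr0 mul0r sqrtr0 invr0 mulr0.
    by rewrite lexx.
  rewrite tot n0 oppr0 expR0 mulr1 lerBlDr lerDl; exact: ler0n.
pose sq := Num.sqrt (n%:R : R).
have sq0 : 0 < sq by rewrite /sq sqrtr_gt0 ltr0n.
have sq2 : sq ^+ 2 = n%:R by rewrite /sq sqr_sqrtr // ler0n.
have sq1 : 1 <= sq.
  have : (1 : R) <= n%:R by rewrite ler1n.
  rewrite -sq2; nra.
pose t := 10 * n%:R * sq.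
pose lam := (2 * sq)^-1.
have lam1 : lam * (2 * sq) = 1 by rewrite mulVf // mulf_neq0 // gt_eqF.
have lam0 : 0 < lam by rewrite invr_gt0 mulr_gt0.
have hl1 : -(1/2) <= lam <= 1/2 by apply/andP; split; nra.
have hl2 : -(1/2) <= - lam <= 1/2 by apply/andP; split; nra.
have t0 : 0 <= t by rewrite /t !mulr_ge0 // ?ler0n ?ltW.
pose Dv (h : 'I_k) (S T : {set 'I_n}) (c : {ffun offdiag n -> 'I_k}) :=
  \sum_(i in S) \sum_(j in T | i != j) (H i j h - colored_weights R c i j h).
pose F (c : {ffun offdiag n -> 'I_k}) := \sum_(h < k) \sum_(S : {set 'I_n}) \sum_(T : {set 'I_n})
   (expR (- (lam * t)) * expR (lam * Dv h S T c) + expR (- (lam * t)) * expR (- lam * Dv h S T c)).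
have F0 : forall h S T c, 0 <= expR (- (lam * t)) * expR (lam * Dv h S T c) + expR (- (lam * t)) * expR (- lam * Dv h S T c).
  by move=> *; apply: addr_ge0; apply: mulr_ge0; apply: ltW; apply: expR_gt0.
have g1 : forall x : R, 0 <= x -> 1 <= expR x.
  by move=> x x0; apply: le_trans (expR_ge1Dx x); rewrite lerDl.
have step : forall (I : finType) (G : I -> R) i, (forall j, 0 <= G j) ->
    1 <= G i -> 1 <= \sum_j G j.
  by move=> I G i G0 h1; apply: le_trans h1 (ge0_le_sum _ G0).
have key : forall c, 1 - F c <= (E c)%:R.
  move=> c.
  have Fc0 : 0 <= F c.
    by apply: sumr_ge0 => h _; apply: sumr_ge0 => S _; apply: sumr_ge0 => T _.
  case: (boolP (E c)) => hE /=.
    rewrite lerBlDr; apply: ler_wpDr => //.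
  rewrite subr_le0.
  case: (pselect (exists h S T, t < `|Dv h S T c|)); last first.
    move=> nex; exfalso; move/negP: hE; apply.
    have hle : forall h S T, `|Dv h S T c| <= t.
      move=> h S T; rewrite leNgt; apply/negP => ht; apply: nex; by exists h, S, T.
    rewrite /E /dcut.
    apply: (le_trans (y := (n%:R ^+ 2)^-1 * \sum_(h < k) t)).
      apply: ler_wpM2l; first by rewrite invr_ge0 exprn_ge0 // ler0n.
      apply: ler_sum => h _; apply: bigmax_le => // S _; apply: bigmax_le => // T _.
      exact: hle h S T.
    rewrite sumr_const card_ord -/sq /t -mulr_natr -sq2.
    rewrite le_eqVlt; apply/orP; left; apply/eqP; field; rewrite gt_eqF //.
  move=> [h [S [T hD]]].
  rewrite /F; apply: (step _ _ h) => [h'|].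
    by apply: sumr_ge0 => S' _; apply: sumr_ge0 => T' _.
  apply: (step _ _ S) => [S'|]; first by apply: sumr_ge0 => T' _.
  apply: (step _ _ T) => // {step}.
  have ea := expR_gt0 (- (lam * t) + lam * Dv h S T c).
  have eb := expR_gt0 (- (lam * t) + - lam * Dv h S T c).
  rewrite -!expRD.
  rewrite ltr_normr in hD; case/orP: hD => hD.
    apply: le_trans (_ : expR (- (lam * t) + lam * Dv h S T c) <= _).
      apply: g1; nra.
    by rewrite lerDl ltW.
  apply: le_trans (_ : expR (- (lam * t) + - lam * Dv h S T c) <= _).
    apply: g1; nra.
  by rewrite lerDr ltW.
have lamt : lam * t = 5 * n%:R.
  rewrite /t /lam; field; rewrite gt_eqF //.
have lam2 : (n * n)%:R * (2 * lam ^+ 2) = n%:R / 2.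
  rewrite natrM -sq2 /lam; field; rewrite gt_eqF //.
have ee : expR (- (lam * t)) * expR ((n * n)%:R * (2 * lam ^+ 2)) = expR (- (9/2 * n%:R)).
  by rewrite -expRD lamt lam2; congr expR; field.
have tailb : forall h S T, \sum_(c : {ffun offdiag n -> 'I_k})
    (\prod_(p : offdiag n) H (val p).1 (val p).2 (c p)) *
    (expR (- (lam * t)) * expR (lam * Dv h S T c) + expR (- (lam * t)) * expR (- lam * Dv h S T c))
    <= 2 * expR (- (9/2 * n%:R)).
  move=> h S T.
  rewrite (eq_bigr (fun c : {ffun offdiag n -> 'I_k} => expR (- (lam * t)) * ((\prod_(p : offdiag n) H (val p).1 (val p).2 (c p)) * expR (lam * Dv h S T c)) +
     expR (- (lam * t)) * ((\prod_(p : offdiag n) H (val p).1 (val p).2 (c p)) * expR (- lam * Dv h S T c)))); last first.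
    by move=> c _; ring.
  have two : forall y : R, 2 * y = y + y by move=> y; ring.
  rewrite big_split /= -!mulr_sumr -ee two.
  have eg := expR_gt0 (- (lam * t)).
  apply: lerD; rewrite ler_pM2l //.
    exact: (@tail R n k H HF h S T lam hl1).
  by rewrite -(sqrrN lam); exact: (@tail R n k H HF h S T (- lam) hl2).
have -> : \sum_(c | E c) \prod_(p : offdiag n) H (val p).1 (val p).2 (c p) =
    \sum_(c : {ffun offdiag n -> 'I_k}) (\prod_(p : offdiag n) H (val p).1 (val p).2 (c p)) * (E c)%:R.
  rewrite big_mkcond; apply: eq_bigr => c _; by case: (E c); rewrite ?mulr1 ?mulr0.
apply: (le_trans (y := \sum_(c : {ffun offdiag n -> 'I_k})
   (\prod_(p : offdiag n) H (val p).1 (val p).2 (c p)) * (1 - F c))); last first.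
  by apply: ler_sum => c _; apply: ler_wpM2l.
under eq_bigr do rewrite mulrBr mulr1.
rewrite sumrB tot lerD2l lerN2.
have -> : \sum_(c : {ffun offdiag n -> 'I_k}) (\prod_(p : offdiag n) H (val p).1 (val p).2 (c p)) * F c =
  \sum_(h < k) \sum_(S : {set 'I_n}) \sum_(T : {set 'I_n}) \sum_(c : {ffun offdiag n -> 'I_k})
    (\prod_(p : offdiag n) H (val p).1 (val p).2 (c p)) *
    (expR (- (lam * t)) * expR (lam * Dv h S T c) + expR (- (lam * t)) * expR (- lam * Dv h S T c)).
  rewrite /F; under eq_bigr do rewrite mulr_sumr; rewrite exchange_big.
  apply: eq_bigr => h _; under eq_bigr do rewrite mulr_sumr; rewrite exchange_big.
  apply: eq_bigr => S _; under eq_bigr do rewrite mulr_sumr; rewrite exchange_big.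
  done.
apply: (le_trans (y := \sum_(h < k) \sum_(S : {set 'I_n}) \sum_(T : {set 'I_n}) 2 * expR (- (9/2 * n%:R)))).
  apply: ler_sum => h _; apply: ler_sum => S _; apply: ler_sum => T _; exact: tailb.
rewrite !sumr_const card_ord -cardsT -powersetT card_powerset cardsT card_ord.
rewrite -!mulrnA mulnA -[X in X <= _]mulr_natr natrM mulrA mulrC ler_wpM2l ?ler0n //.
exact: numfin.
Qed.
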